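(* For each $n\geq 2$ there is a domain $D$ in $\mathbb{R}^n$ such that $\mathbb{R}^n\setminus D$ contains at least two points and there exists $z\in D$ with $$\lambda''_D(z)<\lambda'_D(z)<\lambda_D(z).$$
   Context: Write $d(z,\partial D)=\inf\{|z-a|:a\in\partial D\}$ and $Q(z;a,b)=|z-a|\big(1+\big|\log\frac{|a-b|}{|z-a|}\big|\big)$ (equal to $+\infty$ when $a=b$). For a domain $D\subset\mathbb{R}^n$ whose complement contains at least two points and $z\in D$ define $1/\lambda_D(z)=\inf\{Q(z;a,b): a,b\in\mathbb{R}^n\setminus D\}$, $1/\lambda'_D(z)=\inf\{Q(z;a,b): a,b\in\partial D\}$, $1/\lambda''_D(z)=\inf\{Q(z;a,b): a,b\in\partial D,\ |z-a|=d(z,\partial D)\}$. *)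

(* Defs.v *)
(* R^n is modelled as 'rV[R]_n with its product
   topology (= Euclidean topology); distances use the Euclidean norm. *)
From HB Require Import structures.
From mathcomp Require Import all_boot all_order all_algebra.
From mathcomp Require Import all_classical all_reals all_analysis.
Set Implicit Arguments. Unset Strict Implicit. Unset Printing Implicit Defensive.
Import Order.TTheory GRing.Theory Num.Theory numFieldNormedType.Exports.
Local Open Scope classical_set_scope.
Local Open Scope ring_scope.

Section Defs.
Variables (R : realType) (n : nat).
Local Notation V := 'rV[R]_n.

Definition edist (x y : V) : R := Num.sqrt (\sum_(i < n) (x ord0 i - y ord0 i) ^+ 2).

Definition bdry (D : set V) : set V := closure D `\` interior D.

Definition domain (D : set V) : Prop := [/\ D !=set0, open D & connected D].

Definition dist_bdry (D : set V) (z : V) : R :=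
  fine (ereal_inf [set ((edist z a)%:E) | a in bdry D]).

Definition Qf (z a b : V) : \bar R :=
  if a == b then +oo%E
  else (edist z a * (1 + `| ln (edist a b / edist z a) |))%:E.

Definition lam (D : set V) (z : V) : R :=
  (fine (ereal_inf [set Qf z a b | a in ~` D & b in ~` D]))^-1.

Definition lam' (D : set V) (z : V) : R :=
  (fine (ereal_inf [set Qf z a b | a in bdry D & b in bdry D]))^-1.

Definition lam'' (D : set V) (z : V) : R :=
  (fine (ereal_inf [set Qf z a b | a in [set a | bdry D a /\ edist z a = dist_bdry D z]
                                  & b in bdry D]))^-1.
End Defs.

(* Main.v *)
Require Import Defs.
From HB Require Import structures.
From mathcomp Require Import all_boot all_order all_algebra.
From mathcomp Require Import all_classical all_reals all_analysis.
From mathcomp Require Import ring lra.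
Import Order.TTheory GRing.Theory Num.Theory numFieldNormedType.Exports.
Local Open Scope classical_set_scope.
Local Open Scope ring_scope.

Section S.
Variables (R : realType) (k : nat).
Local Notation V := 'rV[R]_(k.+2).
Local Notation ed := (@Defs.edist R k.+2).

Lemma edist_sq (x y : V) : ed x y ^+ 2 = \sum_i (x ord0 i - y ord0 i) ^+ 2.
Proof. by rewrite /Defs.edist sqr_sqrtr // sumr_ge0 // => i _; rewrite sqr_ge0. Qed.

Lemma edist_ge0 (x y : V) : 0 <= ed x y.
Proof. exact: sqrtr_ge0. Qed.

Lemma edist_sym (x y : V) : ed x y = ed y x.
Proof. by rewrite /Defs.edist; congr Num.sqrt; apply: eq_bigr => i _; rewrite -sqrrN opprB. Qed.

Lemma edist_coord (x y : V) i : `|x ord0 i - y ord0 i| <= ed x y.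
Proof.
rewrite -sqrtr_sqr /Defs.edist; apply: ler_wsqrtr.
rewrite (bigD1 i) //= lerDl sumr_ge0 // => j _; exact: sqr_ge0.
Qed.

Lemma edist_eq0 (x y : V) : ed x y = 0 -> x = y.
Proof.
move=> /eqP; rewrite sqrtr_eq0 => H.
have H0 : \sum_i (x ord0 i - y ord0 i) ^+ 2 = 0.
  apply/eqP; rewrite eq_le H sumr_ge0 // => i _; exact: sqr_ge0.
apply/rowP => i; apply/eqP; rewrite -subr_eq0 -sqrf_eq0; apply/eqP.
by apply: (psumr_eq0P _ H0) => // j _; exact: sqr_ge0.
Qed.

Lemma cs (a b : 'I_k.+2 -> R) :
  (\sum_i a i * b i) ^+ 2 <= (\sum_i a i ^+ 2) * (\sum_i b i ^+ 2).
Proof.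
set A := \sum_i a i ^+ 2; set B := \sum_i b i ^+ 2; set C := \sum_i a i * b i.
have A0 : 0 <= A by rewrite sumr_ge0 // => i _; exact: sqr_ge0.
have E : \sum_i (A * b i - C * a i) ^+ 2 = A * (A * B - C ^+ 2).
  rewrite (eq_bigr (fun i => A ^+ 2 * b i ^+ 2 - (2 * A * C) * (a i * b i) + C ^+ 2 * a i ^+ 2)); last first.
    by move=> i _; ring.
  rewrite big_split big_split /= -!mulr_sumr -/A -/B -/C.
  rewrite sumrN -mulr_sumr -/C; ring.
have G : 0 <= A * (A * B - C ^+ 2).
  by rewrite -E sumr_ge0 // => i _; exact: sqr_ge0.
have [Ap|A0'] := ltrP 0 A.
  by rewrite -subr_ge0; move: G; rewrite pmulr_rge0.
have AE : A = 0 by apply/eqP; rewrite eq_le A0' A0.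
have a0 : forall i, a i = 0.
  move=> i; apply/eqP; rewrite -sqrf_eq0; apply/eqP.
  by apply: (psumr_eq0P _ AE) => // j _; exact: sqr_ge0.
rewrite /C (eq_bigr (fun _ => 0)) ?big1 // ?expr0n ?AE ?mul0r // => i _.
by rewrite a0 mul0r.
Qed.

Lemma edist_tri (x y z : V) : ed x z <= ed x y + ed y z.
Proof.
have h0 := edist_ge0 x y; have h1 := edist_ge0 y z.
have h2 := edist_ge0 x z.
suff Hs : ed x z ^+ 2 <= (ed x y + ed y z) ^+ 2 by nra.
rewrite edist_sq.
rewrite (eq_bigr (fun i => (x ord0 i - y ord0 i) ^+ 2 + 2 * ((x ord0 i - y ord0 i) * (y ord0 i - z ord0 i)) + (y ord0 i - z ord0 i) ^+ 2)); last by move=> i _; ring.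
rewrite big_split big_split /= -mulr_sumr -!edist_sq.
have := cs (fun i => x ord0 i - y ord0 i) (fun i => y ord0 i - z ord0 i).
rewrite -!edist_sq => H.
set C := \sum_i _ in H *.
have HC : C <= ed x y * ed y z.
  have [//|lt] := lerP C (ed x y * ed y z).
  have p0 := mulr_ge0 h0 h1.
  have : (ed x y * ed y z) ^+ 2 < C ^+ 2 by nra.
  by rewrite exprMn; move=> /(le_lt_trans H); rewrite ltxx.
nra.
Qed.

Definition i1 : 'I_k.+2 := @Ordinal k.+2 1 isT.
Definition P (x y : R) : V := \row_j (if j == ord0 then x else if j == i1 then y else 0).

Lemma Pc0 x y : P x y ord0 ord0 = x.
Proof. by rewrite mxE eqxx. Qed.
Lemma Pc1 x y : P x y ord0 i1 = y.
Proof. by rewrite mxE. Qed.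

Lemma edist_P x y x' y' : ed (P x y) (P x' y') = Num.sqrt ((x - x') ^+ 2 + (y - y') ^+ 2).
Proof.
rewrite /Defs.edist (bigD1 ord0) // (bigD1 i1) //= big1 ?addr0 ?Pc0 ?Pc1 ?addrA //.
by move=> j /andP[j1 j0]; rewrite !mxE (negbTE j0) (negbTE j1) subrr expr0n.
Qed.

Lemma P_addZ x y x' y' (t : R) : P x y + t *: P x' y' = P (x + t * x') (y + t * y').
Proof.
apply/rowP => j; rewrite !mxE.
by case: ifP => _ //; case: ifP => _ //; rewrite mulr0 addr0.
Qed.

Lemma sqrt_lt (a s : R) : 0 < a -> s < a ^+ 2 -> Num.sqrt s < a.
Proof.
move=> a0 h; rewrite -(ger0_norm (ltW a0)) -sqrtr_sqr ltr_sqrt //.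
by rewrite exprn_gt0.
Qed.

Lemma sqrt_gt (a s : R) : 0 <= a -> a ^+ 2 < s -> a < Num.sqrt s.
Proof.
move=> a0 h; rewrite -(ger0_norm a0) -sqrtr_sqr ltr_sqrt //.
by apply: le_lt_trans h; rewrite sqr_ge0.
Qed.

Lemma sqrt_eq (a s : R) : 0 <= a -> s = a ^+ 2 -> Num.sqrt s = a.
Proof. by move=> a0 ->; rewrite sqrtr_sqr ger0_norm. Qed.

Definition rho : R := 5^-1.
Definition mm : V := P 1 0.
Definition b0 : V := P 2 0.
Definition zz : V := P 0 0.
Definition D : set V := [set x | rho < ed x mm /\ x <> b0].

Lemma ed_zm : ed zz mm = 1.
Proof. rewrite /zz /mm edist_P; apply: sqrt_eq => //; ring. Qed.
Lemma ed_zb : ed zz b0 = 2.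
Proof. rewrite /zz /b0 edist_P; apply: sqrt_eq => //; ring. Qed.
Lemma ed_mb : ed mm b0 = 1.
Proof. rewrite /mm /b0 edist_P; apply: sqrt_eq => //; ring. Qed.

Lemma notD a : ~ D a -> ed a mm <= rho \/ a = b0.
Proof.
move=> h; have [->|nb] := eqVneq a b0; first by right.
left; rewrite leNgt; apply/negP => lt; apply: h; split => //; exact/eqP.
Qed.

Lemma ball_far a : ed a mm <= rho -> 4/5 <= ed zz a.
Proof.
move=> h; have := edist_tri zz a mm; rewrite ed_zm /rho in h *; lra.
Qed.

Lemma parallelogram a : ed zz a ^+ 2 + ed a b0 ^+ 2 = 2 * ed a mm ^+ 2 + 2.
Proof.
have E : ed mm zz ^+ 2 = 1 by rewrite edist_sym ed_zm expr1n.
suff : ed zz a ^+ 2 + ed a b0 ^+ 2 = 2 * ed a mm ^+ 2 + 2 * ed mm zz ^+ 2 by rewrite E mulr1.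
rewrite !edist_sq -big_split /= !mulr_sumr -big_split /=; apply: eq_bigr => i _.
rewrite /zz /b0 /mm !mxE; case: ifP => _; [ring|]; case: ifP => _; ring.
Qed.

Lemma cont_ed (c : V) : continuous (fun x : V => ed x c).
Proof.
have hs : forall s : seq 'I_k.+2,
    continuous (fun x : V => \sum_(i <- s) (x ord0 i - c ord0 i) ^+ 2).
  elim=> [|i s IH] y.
    under eq_fun do rewrite big_nil.
    exact: cst_continuous.
  under eq_fun do rewrite big_cons.
  apply: (@continuousD _ _ _ (fun x : V => (x ord0 i - c ord0 i) ^+ 2)
             (fun x : V => \sum_(j <- s) (x ord0 j - c ord0 j) ^+ 2)); last exact: IH.
  apply: (@continuous_comp _ _ _ (fun x : V => x ord0 i - c ord0 i) (fun r : R => r ^+ 2)).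
    apply: (@continuousB _ _ _ (fun x : V => x ord0 i) (fun _ => c ord0 i)).
      exact: coord_continuous.
    exact: cst_continuous.
  exact: exprn_continuous.
move=> x; rewrite /Defs.edist.
apply: (@continuous_comp _ _ _ (fun x : V => \sum_i (x ord0 i - c ord0 i) ^+ 2) Num.sqrt).
  exact: hs.
exact: sqrt_continuous.
Qed.

Lemma openD : open D.
Proof.
have -> : D = (fun x => ed x mm) @^-1` [set y | rho < y] `&` ~` [set b0].
  by apply/seteqP; split => x [h1 h2]; split.
apply: openI.
  apply: open_comp; last exact: open_gt.
  by move=> x _; exact: cont_ed.
rewrite openC; apply: accessible_closed_set1; apply: hausdorff_accessible.
exact: norm_hausdorff.
Qed.

Lemma intD : D^° = D.
Proof. by apply/interior_id; exact: openD. Qed.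

Lemma bdry_notD a : bdry D a -> ~ D a.
Proof. by move=> [_]; rewrite intD. Qed.

Lemma bdry_E a : bdry D a -> ed a mm <= rho \/ a = b0.
Proof. by move/bdry_notD/notD. Qed.

Lemma bdry_sphere a : bdry D a -> ed a mm <= rho -> ed a mm = rho.
Proof.
move=> [cl _] h; apply/eqP; rewrite eq_le h /=; rewrite leNgt; apply/negP => lt.
have nb : nbhs a [set y | ed y mm < rho].
  apply: open_nbhs_nbhs; split => //.
  apply: (@open_comp _ _ (fun y => ed y mm) [set r | r < rho]); last exact: open_lt.
  by move=> x _; exact: cont_ed.
have [y [[Dy _] By]] := cl _ nb.
by move: By; rewrite /= ltNge (ltW Dy).
Qed.

Lemma closure_approach (A : set V) p v :
  (forall t : R, 0 < t < 1 -> A (p + t *: v)) -> closure A p.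
Proof.
move=> H B pB.
pose f := fun t : R => p + t *: v.
have fc : continuous f.
  move=> t; apply: (@continuousD _ _ _ (fun _ => p) (fun t : R => t *: v)).
    exact: cst_continuous.
  exact: scalel_continuous.
have : nbhs (0 : R) (f @^-1` B).
  apply: fc; by rewrite /f scale0r addr0.
move=> /nbhs_ballP [e /= e0 sub].
pose t := Num.min (e / 2) (2^-1).
have t0 : 0 < t by rewrite lt_min divr_gt0 //= invr_gt0.
have te : t < e by rewrite gt_min; apply/orP; left; rewrite ltr_pdivrMr // ltr_pMr // ltr1n.
have t1 : t < 1 by rewrite gt_min; apply/orP; right; rewrite invf_lt1 // ltr1n.
exists (f t); split; first by apply: H; rewrite t0 t1.
apply: sub; rewrite /ball /= sub0r normrN ger0_norm //; exact: ltW.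
Qed.

Lemma DP x y : (rho ^+ 2 < (x - 1) ^+ 2 + y ^+ 2) -> (x != 2 \/ y != 0) -> D (P x y).
Proof.
move=> h1 h2; split.
  rewrite /mm edist_P subr0; apply: sqrt_gt => //; rewrite /rho invr_ge0 //.
move=> e; move: h2.
have := congr1 (fun v : V => v ord0 ord0) e; have := congr1 (fun v : V => v ord0 i1) e.
by rewrite /= /b0 !Pc0 !Pc1 => -> ->; rewrite !eqxx; case.
Qed.

Lemma bdry_a' : bdry D (P 1 rho).
Proof.
split.
  apply: (@closure_approach _ _ (P 0 1)) => t /andP[t0 t1].
  rewrite P_addZ; apply: DP; last by left; rewrite mulr0 addr0; apply/eqP; lra.
  rewrite mulr0 addr0 subrr mulr1 /rho; nra.
rewrite intD => -[]; rewrite /mm edist_P subrr subr0 (@sqrt_eq rho) ?ltxx //.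
  by rewrite /rho invr_ge0.
ring.
Qed.

Lemma bdry_b0 : bdry D b0.
Proof.
split; last by rewrite intD => -[].
apply: (@closure_approach _ _ (P 0 1)) => t /andP[t0 t1].
rewrite /b0 P_addZ; apply: DP; last by right; rewrite add0r mulr1; apply/eqP; lra.
rewrite mulr0 addr0 mulr1 /rho; nra.
Qed.

Lemma bdry_as : bdry D (P (4/5) 0).
Proof.
split.
  apply: (@closure_approach _ _ (P (-1) 0)) => t /andP[t0 t1].
  rewrite P_addZ; apply: DP; last by left; apply/eqP; lra.
  rewrite mulr0 addr0 /rho; nra.
rewrite intD => -[]; rewrite /mm edist_P subrr (@sqrt_eq rho) ?ltxx //.
  by rewrite /rho invr_ge0.
by rewrite /rho; field.
Qed.

Lemma coord_add (p v : V) (t : R) j : (p + t *: v) ord0 j = p ord0 j + t * v ord0 j.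
Proof. by rewrite !mxE. Qed.

Lemma seg_comp (A : set V) p v : A p -> (forall t : R, 0 <= t <= 1 -> A (p + t *: v)) ->
  connected_component A p (p + v).
Proof.
move=> Ap H; pose f := fun t : R => p + t *: v.
have fc : continuous f.
  move=> t; apply: (@continuousD _ _ _ (fun _ => p) (fun t : R => t *: v)).
    exact: cst_continuous.
  exact: scalel_continuous.
have cB : connected (f @` `[(0:R), 1]%classic).
  apply: connected_continuous_connected; first exact: segment_connected.
  exact: continuous_subspaceT.
apply: (@connected_component_max _ A (f @` `[(0:R), 1]%classic) p) => //.
- exists 0; first by rewrite /= in_itv /= lexx ler01.
  by rewrite /f scale0r addr0.
- move=> _ [t tI <-]; apply: H; move: tI; by rewrite /= in_itv.
- exists 1; first by rewrite /= in_itv /= lexx ler01.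
  by rewrite /f scale1r.
Qed.

Lemma inD1 (w : V) : 1 <= `|w ord0 i1| -> D w.
Proof.
move=> h; rewrite /D /=; split.
  apply: lt_le_trans (edist_coord w mm i1); rewrite /mm Pc1 subr0.
  by apply: lt_le_trans h; rewrite /rho invf_lt1 // ltr1n.
by move=> e; move: h; rewrite e /b0 Pc1 normr0 ler10.
Qed.

Lemma Dzz : D zz.
Proof. apply: DP; [rewrite /rho; nra | left; apply/eqP; lra]. Qed.

Lemma Dconn : connected D.
Proof.
have key : forall x, D x -> connected_component D zz x.
  move=> x Dx.
  set x1 := x ord0 i1.
  pose sg : R := if 0 <= x1 then 1 else -1.
  have sg2 : sg * sg = 1 by rewrite /sg; case: ifP => _; ring.
  have sgx : sg * x1 = `|x1|.
    rewrite /sg; case: ifP => h; first by rewrite mul1r ger0_norm.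
    by rewrite ltr0_norm ?mulN1r // ltNge h.
  have nsg : `|sg| = 1 by rewrite /sg; case: ifP => _; rewrite ?normrN normr1.
  have nge : forall c, sg * c <= `|c|.
    by move=> c; rewrite -[`|c|]mul1r -nsg -normrM ler_norm.
  pose T := 1 + `|x1|.
  have T1 : 1 <= T by rewrite /T lerDl.
  pose v1 := P 0 (sg * T).
  have step1 : connected_component D x (x + v1).
    apply: seg_comp => // t /andP[t0 t1]; rewrite /D /=; split.
      have hsq : ed x mm ^+ 2 <= ed (x + t *: v1) mm ^+ 2.
        rewrite !edist_sq; apply: ler_sum => j _; rewrite coord_add /v1 /mm !mxE.
        case: ifP => j0; first by rewrite mulr0 addr0.
        case: ifP => j1; last by rewrite mulr0 addr0.
        move/eqP: j1 => ->; rewrite -/x1 !subr0.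
        have -> : (x1 + t * (sg * T)) ^+ 2 = x1 ^+ 2 + 2 * t * T * (sg * x1) + t ^+ 2 * T ^+ 2 * (sg * sg) by ring.
        rewrite sgx sg2 mulr1 -addrA lerDl addr_ge0 //.
          by rewrite !mulr_ge0 // (le_trans ler01 T1).
        by rewrite mulr_ge0 // sqr_ge0.
      have := edist_ge0 x mm; have := edist_ge0 (x + t *: v1) mm; case: Dx => Dx1 _.
      rewrite /rho in Dx1 *; nra.
    move=> e; have := congr1 (fun w : V => w ord0 i1) e.
    rewrite /= coord_add /v1 /b0 !Pc1 -/x1 => h.
    have h' : sg * (x1 + t * (sg * T)) = sg * x1 + t * T * (sg * sg) by ring.
    rewrite h mulr0 sgx sg2 mulr1 in h'.
    have n0 := normr_ge0 x1.
    have tz : t = 0 by nra.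
    by case: Dx => _; apply; rewrite -e tz scale0r addr0.
  set y := x + v1.
  have sy : 1 <= sg * y ord0 i1.
    have -> : y ord0 i1 = x1 + sg * T by rewrite /y /v1 mxE Pc1.
    have := normr_ge0 x1; rewrite mulrDr sgx mulrA sg2 mul1r /T; lra.
  pose u := P 0 sg.
  have step2 : connected_component D y u.
    have -> : u = y + (u - y) by rewrite addrC subrK.
    apply: seg_comp; first by apply: inD1; apply: le_trans sy (nge _).
    move=> t /andP[t0 t1]; apply: inD1; apply: le_trans (nge _).
    rewrite coord_add.
    have -> : (u - y) ord0 i1 = u ord0 i1 - y ord0 i1 by rewrite !mxE.
    rewrite /u Pc1.
    have -> : sg * (y ord0 i1 + t * (sg - y ord0 i1)) = (1 - t) * (sg * y ord0 i1) + t * (sg * sg) by ring.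
    rewrite sg2; nra.
  have step3 : connected_component D zz u.
    have -> : u = zz + u.
      apply/rowP => j; rewrite !mxE; case: ifP => _; rewrite ?add0r //.
      by case: ifP => _; rewrite add0r.
    apply: seg_comp; first exact: Dzz.
    move=> t /andP[t0 t1]; rewrite /zz /u P_addZ; apply: DP.
      rewrite /rho; nra.
    by left; rewrite mulr0 addr0; apply/eqP; lra.
  apply: connected_component_trans step3 _.
  apply: connected_component_trans (connected_component_sym step2) _.
  exact: connected_component_sym.
have -> : D = connected_component D zz.
  apply/seteqP; split; [exact: key | exact: connected_component_sub].
exact: component_connected.
Qed.

Lemma Qlb (r s : R) : 0 < r -> 0 < s ->
  [/\ r <= r * (1 + `|ln (s / r)|), 2 * r - s <= r * (1 + `|ln (s / r)|)
    & 2 * r - r ^+ 2 / s <= r * (1 + `|ln (s / r)|)].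
Proof.
move=> r0 s0.
have l1 : ln (s / r) <= s / r - 1.
  have := @le_ln1Dx R (s / r - 1); rewrite (_ : 1 + (s / r - 1) = s / r); last by ring.
  apply; have : 0 < s / r by rewrite divr_gt0.
  lra.
have l2 : ln (r / s) <= r / s - 1.
  have := @le_ln1Dx R (r / s - 1); rewrite (_ : 1 + (r / s - 1) = r / s); last by ring.
  apply; have : 0 < r / s by rewrite divr_gt0.
  lra.
have e : ln (s / r) = - ln (r / s).
  by rewrite -lnV ?invf_div // posrE divr_gt0.
set L := `|ln (s / r)|.
have La : ln (s / r) <= L by apply: ler_norm.
have Lb : - ln (s / r) <= L by rewrite /L -normrN; apply: ler_norm.
have L0 : 0 <= L by apply: normr_ge0.
split.
- by rewrite ler_peMr ?(ltW r0) // lerDl.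
- have -> : 2 * r - s = r * (2 - s / r) by field; rewrite gt_eqF.
  rewrite ler_pM2l //; lra.
- have -> : 2 * r - r ^+ 2 / s = r * (2 - r / s) by field; rewrite gt_eqF.
  rewrite ler_pM2l //; lra.
Qed.

Lemma ed_pos (a b : V) : a <> b -> 0 < ed a b.
Proof.
move=> ab; rewrite lt_def edist_ge0 andbT; apply/eqP => h; apply: ab.
exact: edist_eq0.
Qed.

Lemma ed_xx (x : V) : ed x x = 0.
Proof. by rewrite /Defs.edist big1 ?sqrtr0 // => i _; rewrite subrr expr0n. Qed.

Lemma Qf_lb (z a b : V) (L : R) :
  (a <> b -> L <= ed z a * (1 + `|ln (ed a b / ed z a)|)) -> (L%:E <= Qf z a b)%E.
Proof.
rewrite /Qf; case: eqP => [_ _|ab H]; first exact: leey.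
by rewrite lee_fin; apply: H.
Qed.

Lemma Qf_eq (z a b : V) (r : R) : a <> b -> ed z a = r -> ed a b = r -> 0 < r ->
  Qf z a b = r%:E.
Proof.
move=> ab h1 h2 r0; rewrite /Qf; case: eqP => // _.
by rewrite h1 h2 divff ?gt_eqF // ln1 normr0 addr0 mulr1.
Qed.

Lemma fine_rng (e : \bar R) (L U : R) : 0 < L -> (L%:E <= e)%E -> (e <= U%:E)%E ->
  L <= fine e <= U.
Proof. by case: e => [r| |] //= L0; rewrite ?lee_fin => h1 h2; rewrite h1 h2. Qed.

Lemma fine_inv_le (e : \bar R) (L : R) : 0 < L -> (L%:E <= e)%E -> (fine e)^-1 <= L^-1.
Proof.
case: e => [r| |] //= L0; rewrite ?lee_fin => h.
  by rewrite lef_pV2 ?posrE // (lt_le_trans L0 h).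
by rewrite invr0 invr_ge0 ltW.
Qed.

Lemma p45 : (0 : R) < 4/5. Proof. lra. Qed.
Lemma p2 : (0 : R) < 2. Proof. lra. Qed.
Lemma rho_val : rho = 5^-1. Proof. by []. Qed.

Lemma bdry_cases a : bdry D a -> (ed a mm = rho /\ 4/5 <= ed zz a) \/ a = b0.
Proof.
move=> ba; case: (bdry_E _ ba) => [h|->]; last by right.
by left; split; [exact: bdry_sphere | exact: ball_far].
Qed.

Lemma lamI : 1 <= lam D zz.
Proof.
rewrite /lam.
set I := ereal_inf _.
have h1 : ((4/5 : R)%:E <= I)%E.
  apply: le_ereal_inf_tmp => _ [a Da [b Db <-]]; apply: Qf_lb => ab.
  have r0 : 4/5 <= ed zz a.
    by case: (notD _ Da) => [/ball_far //|->]; rewrite ed_zb; lra.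
  have [q1 _ _] := Qlb _ _ (lt_le_trans p45 r0) (ed_pos _ _ ab).
  exact: le_trans r0 q1.
have h2 : (I <= (1 : R)%:E)%E.
  apply: ereal_inf_lbound; exists mm.
    by rewrite /D /= ed_xx => -[h _]; move: h; rewrite /rho; lra.
  exists b0; first by rewrite /D /= => -[_]; apply.
  apply: Qf_eq => //; [|exact: ed_zm|exact: ed_mb].
  move=> e; have := congr1 (fun w : V => w ord0 ord0) e; rewrite /= /mm /b0 !Pc0.
  by move/eqP; rewrite eq_sym -subr_eq0 (_ : 2 - 1 = 1 :> R) ?oner_eq0 //; ring.
have /andP[f1 f2] := @fine_rng I (4/5) 1 p45 h1 h2.
by rewrite -invr1 lef_pV2 ?posrE //; lra.
Qed.

Definition a' : V := P 1 rho.

Lemma ed_za' : ed zz a' = Num.sqrt (1 + rho ^+ 2).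
Proof. by rewrite /zz /a' edist_P; congr Num.sqrt; ring. Qed.

Lemma ed_a'b : ed a' b0 = ed zz a'.
Proof. by rewrite ed_za' /a' /b0 edist_P; congr Num.sqrt; ring. Qed.

Lemma za'_lt : ed zz a' < 21/20.
Proof. rewrite ed_za'; apply: sqrt_lt; rewrite /rho; lra. Qed.

Lemma za'_gt : 1 < ed zz a'.
Proof. rewrite ed_za'; apply: sqrt_gt; rewrite /rho; lra. Qed.

Lemma lam'I : (ed zz a')^-1 <= lam' D zz <= (101/100)^-1.
Proof.
rewrite /lam'.
set I := ereal_inf _.
have h1 : ((101/100 : R)%:E <= I)%E.
  apply: le_ereal_inf_tmp => _ [a Da [b Db <-]]; apply: Qf_lb => ab.
  have s0 := ed_pos _ _ ab.
  case: (bdry_cases _ Da) => [[am r0]|ab0].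
    have [q1 q2 q3] := Qlb _ _ (lt_le_trans p45 r0) s0.
    case: (bdry_cases _ Db) => [[bm _]|bb0].
      have : ed a b <= 2/5.
        have := edist_tri a mm b; rewrite am (edist_sym mm b) bm /rho; lra.
      by move=> sle; apply: le_trans _ q2; lra.
    rewrite bb0 in ab s0 q1 q2 q3 *.
    have par := parallelogram a; rewrite am /rho in par.
    have [rs|sr] := lerP (ed a b0) (ed zz a).
      apply: le_trans _ q1.
      have := edist_ge0 a b0; have := edist_ge0 zz a; nra.
    apply: le_trans _ q3.
    set r := ed zz a in r0 par sr *; set s := ed a b0 in par sr s0 *.
    suff : r ^+ 2 / s <= 2 * r - 101/100 by lra.
    rewrite ler_pdivrMr //.
    have h4 : 0 <= (r - 4/5) * (s - r) by apply: mulr_ge0; lra.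
    have h5 : 0 <= (s - r) * (s - r) by apply: mulr_ge0; lra.
    have h6 : r ^+ 2 <= 26/25 by nra.
    have h7 : r <= 51/50 by nra.
    have h8 : 0 <= (51/50 - r) * (s - r) by apply: mulr_ge0; lra.
    nra.
  rewrite ab0 in s0 *; rewrite ed_zb.
  have [q1 _ _] := Qlb _ _ p2 s0.
  by apply: le_trans _ q1; lra.
have h2 : (I <= (ed zz a')%:E)%E.
  apply: ereal_inf_lbound; exists a'; first exact: bdry_a'.
  exists b0; first exact: bdry_b0.
  apply: Qf_eq => //; [|exact: ed_a'b|exact: (lt_trans ltr01 za'_gt)].
  move=> e; have := congr1 (fun w : V => w ord0 ord0) e; rewrite /= /a' /b0 !Pc0.
  by move/eqP; rewrite eq_sym -subr_eq0 (_ : 2 - 1 = 1 :> R) ?oner_eq0 //; ring.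
have p101 : (0 : R) < 101/100 by lra.
have /andP[f1 f2] := @fine_rng I (101/100) (ed zz a') p101 h1 h2.
have f0 : 0 < fine I by lra.
have za0 := lt_trans ltr01 za'_gt.
by rewrite !lef_pV2 ?posrE ?f1 ?f2 //; lra.
Qed.

Lemma distI : dist_bdry D zz = 4/5.
Proof.
rewrite /dist_bdry; set I := ereal_inf _.
have h1 : ((4/5 : R)%:E <= I)%E.
  apply: le_ereal_inf_tmp => _ [a Da <-]; rewrite lee_fin.
  by case: (bdry_cases _ Da) => [[_ //]|->]; rewrite ed_zb; lra.
have h2 : (I <= (4/5 : R)%:E)%E.
  apply: ereal_inf_lbound; exists (P (4/5) 0); first exact: bdry_as.
  congr EFin; rewrite /zz edist_P; apply: sqrt_eq; [lra|ring].
have /andP[f1 f2] := @fine_rng I (4/5) (4/5) p45 h1 h2.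
by apply/eqP; rewrite eq_le f1 f2.
Qed.

Lemma lam''I : lam'' D zz <= (21/20)^-1.
Proof.
rewrite /lam''; set I := ereal_inf _.
have p21 : (0 : R) < 21/20 by lra.
apply: fine_inv_le => //.
apply: le_ereal_inf_tmp => _ [a [Da Ea] [b Db <-]]; apply: Qf_lb => ab.
rewrite distI in Ea; rewrite Ea.
have s0 := ed_pos _ _ ab.
have [q1 q2 q3] := Qlb _ _ p45 s0.
case: (bdry_cases _ Da) => [[am _]|ab0]; last first.
  by move: Ea; rewrite ab0 ed_zb => h; exfalso; lra.
case: (bdry_cases _ Db) => [[bm _]|bb0].
  have : ed a b <= 2/5.
    have := edist_tri a mm b; rewrite am (edist_sym mm b) bm /rho; lra.
  by move=> sle; apply: le_trans _ q2; lra.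
rewrite bb0 in s0 q1 q2 q3 *.
have sge : 6/5 <= ed a b0 by have := edist_tri zz a b0; rewrite Ea ed_zb; lra.
apply: le_trans _ q3.
suff : (4/5) ^+ 2 / ed a b0 <= 11/20 by lra.
rewrite ler_pdivrMr //; lra.
Qed.

Theorem main : exists D : set V,
    domain D /\
    (exists a b : V, ~ D a /\ ~ D b /\ a <> b) /\
    (exists z : V, D z /\ lam'' D z < lam' D z /\ lam' D z < lam D z).
Proof.
exists D; split; first by split; [exists zz; exact: Dzz|exact: openD|exact: Dconn].
split.
  exists mm, b0; split; first by rewrite /D /= ed_xx => -[h _]; move: h; rewrite /rho; lra.
  split; first by rewrite /D /= => -[_]; apply.
  move=> e; have := congr1 (fun w : V => w ord0 ord0) e; rewrite /= /mm /b0 !Pc0.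
  by move/eqP; rewrite eq_sym -subr_eq0 (_ : 2 - 1 = 1 :> R) ?oner_eq0 //; ring.
exists zz; split; first exact: Dzz.
have h1 := lamI; have /andP[h2 h3] := lam'I; have h4 := lam''I.
have za1 := za'_lt; have za2 := za'_gt.
have i1 : (21/20 : R)^-1 < (ed zz a')^-1.
  by rewrite ltf_pV2 ?posrE //; lra.
have i2 : (101/100 : R)^-1 < 1 by rewrite invf_lt1; lra.
split; [exact: (le_lt_trans h4 (lt_le_trans i1 h2)) | exact: (le_lt_trans h3 (lt_le_trans i2 h1))].
Qed.
End S.

Theorem lemma3 (R : realType) (n : nat) (hn : (2 <= n)%N) :
  exists D : set 'rV[R]_n,
    domain D /\
    (exists a b : 'rV[R]_n, ~ D a /\ ~ D b /\ a <> b) /\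
    (exists z : 'rV[R]_n, D z /\ lam'' D z < lam' D z /\ lam' D z < lam D z).
Proof.
case: n hn => [|[|k]] // _.
exact: main.
Qed.
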